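(* Fix a dataset $\mathbb D_N$ and a point $x\in\mathcal X$. Let $\lambda_\dagger(x|\mathbb D_N)$ be the minimum eigenvalue of the feasibility tradeoff matrix $\mathcal F(x|\mathbb D_N)=\beta^2\Sigma_{L_gB}(x|\mathbb D_N)-\widehat{L_gB}(x|\mathbb D_N)^T\widehat{L_gB}(x|\mathbb D_N)$, and let $e_\dagger(x|\mathbb D_N)$ be an associated unit eigenvector. Suppose $\lambda_\dagger(x|\mathbb D_N)<0$. Then: - the GP-CBF-SOCP is feasible at $x$; and - there exists $\alpha_{\min}>0$ such that for every $\alpha>\alpha_{\min}$, the input $$u_{\text{safe}}(x)=\alpha\,\mathrm{sgn}\big(\widehat{L_gB}(x|\mathbb D_N)e_\dagger(x|\mathbb D_N)\big)\,e_\dagger(x|\mathbb D_N)$$ is a feasible solution of the GP-CBF-SOCP at $x$.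
   Context: Consider $\dot x=f(x)+g(x)u$ with $x\in\mathcal X\subset\mathbb R^n$ and $u\in\mathbb R^m$, where $f,g$ are locally Lipschitz and unknown. A nominal model $\tilde f,\tilde g$ is available. Let $B:\mathcal X\to\mathbb R$ be $C^1$, let $\gamma$ be extended class-$\mathcal K_\infty$, and let $u_{\text{ref}}$ be a reference controller. Lie derivatives: $L_{\tilde f}B=\nabla B\,\tilde f$ and $L_{\tilde g}B=\nabla B\,\tilde g\in\mathbb R^{1\times m}$; $L_fB$ and $L_gB$ are defined similarly. Set $\Delta_B(x,u)=(L_fB-L_{\tilde f}B)(x)+(L_gB-L_{\tilde g}B)(x)u$. A dataset $\mathbb D_N=\{((x_j,u_j),z_j)\}$ consists of $z_j=\Delta_B(x_j,u_j)+\epsilon_j$. GP model with the affine dot product kernel $k_c((x,y),(x',y'))=y^T\mathrm{diag}(k_1(x,x'),\dots,k_{m+1}(x,x'))y'$: - Let $y_j=[1,u_j^T]^T$, $\mathbf z=(z_j)$, let $\sigma_n>0$, and let $K_c$ be the Gram matrix of $k_c$ on the data. - Let $K_{**}(x)=\mathrm{diag}(k_i(x,x))$, and let $K_{*Y}(x)\in\mathbb R^{(m+1)\times N}$ have entries $k_i(x,x_j)(y_j)_i$. - Define $m_B(x|\mathbb D_N)=K_{*Y}(K_c+\sigma_n^2I)^{-1}\mathbf z$ and $\Sigma_B(x|\mathbb D_N)=K_{**}-K_{*Y}(K_c+\sigma_n^2I)^{-1}K_{*Y}^T$, which is positive definite. - The posterior mean and standard deviation are $\mu_B(x,u|\mathbb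 D_N)=m_B^T[1;u]$ and $\sigma_B(x,u|\mathbb D_N)=\sqrt{[1,u^T]\Sigma_B[1;u]}$. $\beta>0$ is a constant. Derived quantities: - $\widehat{L_fB}(x|\mathbb D_N)=L_{\tilde f}B(x)+(m_B)_1$ and $\widehat{L_gB}(x|\mathbb D_N)=L_{\tilde g}B(x)+((m_B)_2,\dots,(m_B)_{m+1})$. - $\Sigma_{L_gB}(x|\mathbb D_N)$ is the lower-right $m\times m$ block (rows and columns $2,\dots,m+1$) of $\Sigma_B(x|\mathbb D_N)$. The GP-CBF-SOCP at $x$ is: minimize $\|u-u_{\text{ref}}(x)\|_2^2$ over $u\in\mathbb R^m$ subject to $L_{\tilde f}B(x)+L_{\tilde g}B(x)u+\mu_B(x,u|\mathbb D_N)-\beta\sigma_B(x,u|\mathbb D_N)+\gamma(B(x))\ge0$. It is feasible at $x$ if some $u$ satisfies the constraint. *)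

(* Defs.v *)
From HB Require Import structures.
From mathcomp Require Import all_boot all_order all_algebra.
From mathcomp Require Import all_classical all_reals all_analysis.
Set Implicit Arguments. Unset Strict Implicit. Unset Printing Implicit Defensive.
Import Order.TTheory GRing.Theory Num.Theory.
Import numFieldNormedType.Exports.
Local Open Scope ring_scope.

Section GPCBF.
Variables (R : realType) (n m N : nat).

(** Lie derivatives along a vector field, via the directional derivative
    'D_v B x = nabla B(x) . v *)
Definition LieF (B : 'cV[R]_n -> R) (f : 'cV[R]_n -> 'cV[R]_n) (x : 'cV[R]_n) : R :=
  'D_(f x) B x.
Definition LieG (B : 'cV[R]_n -> R) (g : 'cV[R]_n -> 'M[R]_(n, m)) (x : 'cV[R]_n)
  : 'rV[R]_m := \row_j 'D_(col j (g x)) B x.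

Definition ext_classKinf (gam : R -> R) : Prop :=
  continuous gam /\ gam 0 = 0 /\ {homo gam : a b / a < b} /\
  (forall M : R, exists r : R, M < gam r) /\ (forall M : R, exists r : R, gam r < M).

Definition aug (u : 'cV[R]_m) : 'cV[R]_(1 + m) := col_mx (const_mx 1) u.

(** GP with the affine dot product kernel; kernels k i, i = 1..m+1 (indexed by 'I_(1+m)),
    data points xs j, inputs us j, measurements z (j : 'I_N), noise level sn. *)
Variables (k : 'I_(1 + m) -> 'cV[R]_n -> 'cV[R]_n -> R)
          (xs : 'I_N -> 'cV[R]_n) (us : 'I_N -> 'cV[R]_m) (z : 'cV[R]_N) (sn : R).

Definition Kc : 'M[R]_N :=
  \matrix_(j, l) \sum_(i < 1 + m) (aug (us j)) i 0 * k i (xs j) (xs l) * (aug (us l)) i 0.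

Definition Kss (x : 'cV[R]_n) : 'M[R]_(1 + m) := diag_mx (\row_i k i x x).

Definition KsY (x : 'cV[R]_n) : 'M[R]_(1 + m, N) :=
  \matrix_(i, j) (k i x (xs j) * (aug (us j)) i 0).

Definition mB (x : 'cV[R]_n) : 'cV[R]_(1 + m) :=
  KsY x *m invmx (Kc + sn ^+ 2 *: 1%:M) *m z.

Definition SigmaB (x : 'cV[R]_n) : 'M[R]_(1 + m) :=
  Kss x - KsY x *m invmx (Kc + sn ^+ 2 *: 1%:M) *m (KsY x)^T.

Definition muB (x : 'cV[R]_n) (u : 'cV[R]_m) : R := ((mB x)^T *m aug u) 0 0.

Definition sigmaB (x : 'cV[R]_n) (u : 'cV[R]_m) : R :=
  Num.sqrt (((aug u)^T *m SigmaB x *m aug u) 0 0).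

Definition LgB_hat (LgtB : 'rV[R]_m) (x : 'cV[R]_n) : 'rV[R]_m :=
  LgtB + (dsubmx (mB x))^T.

Definition Sigma_LgB (x : 'cV[R]_n) : 'M[R]_m := drsubmx (SigmaB x).

Definition Ftrade (beta : R) (LgtB : 'rV[R]_m) (x : 'cV[R]_n) : 'M[R]_m :=
  beta ^+ 2 *: Sigma_LgB x - (LgB_hat LgtB x)^T *m LgB_hat LgtB x.

(** the GP-CBF-SOCP constraint at x, given the nominal Lie derivatives
    LftB = L_{f~}B(x), LgtB = L_{g~}B(x) and Bx = B(x) *)
Definition socp_constraint (beta : R) (gam : R -> R) (LftB : R) (LgtB : 'rV[R]_m)
  (Bx : R) (x : 'cV[R]_n) (u : 'cV[R]_m) : Prop :=
  0 <= LftB + (LgtB *m u) 0 0 + muB x u - beta * sigmaB x u + gam Bx.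

Definition socp_feasible beta gam LftB LgtB Bx x : Prop :=
  exists u : 'cV[R]_m, socp_constraint beta gam LftB LgtB Bx x u.

End GPCBF.

Definition is_min_eigenvalue (R : realType) (p : nat) (A : 'M[R]_p) (lam : R) : Prop :=
  eigenvalue A lam /\ (forall mu : R, eigenvalue A mu -> lam <= mu).

Definition is_unit_eigenvector (R : realType) (p : nat) (A : 'M[R]_p) (lam : R)
  (e : 'cV[R]_p) : Prop :=
  A *m e = lam *: e /\ \sum_(i < p) e i 0 ^+ 2 = 1.

(* Main.v *)
Require Import Defs.
From HB Require Import structures.
From mathcomp Require Import all_boot all_order all_algebra.
From mathcomp Require Import all_classical all_reals all_analysis.
From mathcomp Require Import ring lra.
Import Order.TTheory GRing.Theory Num.Theory.
Import numFieldNormedType.Exports.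
Local Open Scope ring_scope.
Local Open Scope classical_set_scope.

Lemma scal {R : realType} (C c b q d : R) {p beta : R} :
  0 < p -> 0 < beta -> 0 < d -> p ^+ 2 = beta ^+ 2 * q + d ->
  exists amin : R, 0 < amin /\ forall a y : R, amin < a -> `|y| <= a * `|b| ->
   0 <= C + a * p - beta * Num.sqrt (c + y + a ^+ 2 * q).
Proof.
move=> p0 b0 d0 E.
set K := 2 * `|C| * p + beta ^+ 2 * `|c| + beta ^+ 2 * `|b|.
have K0 : 0 <= K by rewrite /K; do ! apply: addr_ge0 => //; apply: mulr_ge0 => //; nra.
exists (1 + K / d + `|C| / p); split.
  have : 0 <= K / d by apply: divr_ge0 => //; exact: ltW.
  have : 0 <= `|C| / p by apply: divr_ge0 => //; exact: ltW.
  lra.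
move=> a y Ha Hy.
have h1 : K <= a * d.
  have : K / d <= a.
    have : 0 <= `|C| / p by apply: divr_ge0 => //; exact: ltW.
    lra.
  by rewrite ler_pdivrMr.
have h2 : `|C| <= a * p.
  have : `|C| / p <= a.
    have : 0 <= K / d by apply: divr_ge0 => //; exact: ltW.
    lra.
  by rewrite ler_pdivrMr.
have a1 : 1 <= a.
  have : 0 <= K / d by apply: divr_ge0 => //; exact: ltW.
  have : 0 <= `|C| / p by apply: divr_ge0 => //; exact: ltW.
  lra.
have ab : forall v : R, v <= `|v| /\ - v <= `|v|.
  by move=> v; split; [exact: ler_norm | rewrite -normrN; exact: ler_norm].
have [hC hC'] := ab C. have [hc hc'] := ab c. have [hy hy'] := ab y.
set S := c + y + a ^+ 2 * q.
have CP : 0 <= C + a * p by lra.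
suff : beta * Num.sqrt S <= C + a * p by lra.
have [S0|S0] := lerP S 0.
  by rewrite ler0_sqrtr // mulr0.
have sq := sqr_sqrtr (ltW S0).
have s0 := sqrtr_ge0 S.
set s := Num.sqrt S in sq s0 *.
have key : beta ^+ 2 * S <= (C + a * p) ^+ 2.
  rewrite /S.
  have e2 : (C + a * p) ^+ 2 = C ^+ 2 + 2 * a * C * p + a ^+ 2 * (beta ^+ 2 * q + d).
    rewrite -E; ring.
  rewrite e2.
  have : beta ^+ 2 * y <= beta ^+ 2 * (a * `|b|).
    apply: ler_wpM2l; [nra| lra].
  have : beta ^+ 2 * c <= beta ^+ 2 * `|c|. apply: ler_wpM2l; [nra| lra].
  have : - (2 * a * C * p) <= 2 * a * `|C| * p.
    have : 0 <= 2 * a * p by nra. nra.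
  have : a * K <= a * (a * d) by apply: ler_wpM2l; lra.
  rewrite /K. have : 0 <= beta ^+ 2 * `|c| by nra.
  move=> X0; have : beta ^+ 2 * `|c| <= a * (beta ^+ 2 * `|c|).
    by rewrite -{1}(mul1r (beta ^+ 2 * `|c|)); apply: ler_wpM2r.
  have := sqr_ge0 C.
  nra.
have : 0 <= beta * s by nra.
nra.
Qed.


Theorem lemma4 (R : realType) (n m N : nat)
  (X : set 'cV[R]_n)
  (ft : 'cV[R]_n -> 'cV[R]_n) (gt : 'cV[R]_n -> 'M[R]_(n, m))
  (B : 'cV[R]_n -> R)
  (HB1 : forall y, differentiable B y)
  (HB2 : forall v : 'cV[R]_n, continuous (fun y => 'D_v B y))
  (gam : R -> R) (Hgam : ext_classKinf gam)
  (beta : R) (Hbeta : 0 < beta)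
  (k : 'I_(1 + m) -> 'cV[R]_n -> 'cV[R]_n -> R)
  (xs : 'I_N -> 'cV[R]_n) (us : 'I_N -> 'cV[R]_m) (z : 'cV[R]_N) (sn : R)
  (Hsn : 0 < sn) (Hxs : forall j, X (xs j))
  (x : 'cV[R]_n) (Hx : X x)
  (HSigma : forall v : 'cV[R]_(1 + m), v != 0 ->
      0 < (v^T *m SigmaB k xs us sn x *m v) 0 0)
  (lam : R) (e : 'cV[R]_m)
  (Hlam : is_min_eigenvalue (Ftrade k xs us z sn beta (LieG B gt x) x) lam)
  (He : is_unit_eigenvector (Ftrade k xs us z sn beta (LieG B gt x) x) lam e)
  (Hneg : lam < 0) :
  socp_feasible k xs us z sn beta gam (LieF B ft x) (LieG B gt x) (B x) x /\
  exists alpha_min : R, 0 < alpha_min /\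
    forall alpha : R, alpha_min < alpha ->
      socp_constraint k xs us z sn beta gam (LieF B ft x) (LieG B gt x) (B x) x
        ((alpha * Num.sg ((LgB_hat k xs us z sn (LieG B gt x) x *m e) 0 0)) *: e).
Proof.
have eD : forall p r (A C : 'M[R]_(p, r)) i j, (A + C) i j = A i j + C i j by move=> *; rewrite mxE.
have eN : forall p r (A C : 'M[R]_(p, r)) i j, (A - C) i j = A i j - C i j by move=> *; rewrite !mxE.
have eZ : forall p r a (A : 'M[R]_(p, r)) i j, (a *: A) i j = a * A i j by move=> *; rewrite mxE.
set LgtB := LieG B gt x.
set F := Ftrade k xs us z sn beta LgtB x.
set L := LgB_hat k xs us z sn LgtB x.
set Sg := SigmaB k xs us sn x.
set mb := mB k xs us z sn x.
pose w0 : 'cV[R]_(1 + m) := aug 0.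
pose w1 : 'cV[R]_(1 + m) := col_mx 0 e.
have hA : forall t : R, aug (t *: e) = w0 + t *: w1.
  by move=> t; rewrite /w0 /w1 /aug scale_col_mx add_col_mx scaler0 addr0 add0r.
pose c := (w0^T *m Sg *m w0) 0 0.
pose bb := (w0^T *m Sg *m w1) 0 0 + (w1^T *m Sg *m w0) 0 0.
pose q := (w1^T *m Sg *m w1) 0 0.
have hB : forall t : R, ((aug (t *: e))^T *m Sg *m aug (t *: e)) 0 0 = c + t * bb + t ^+ 2 * q.
  move=> t; rewrite hA.
  have gen : forall S : 'M[R]_(1 + m), ((w0 + t *: w1)^T *m S *m (w0 + t *: w1)) 0 0 =
     (w0^T *m S *m w0) 0 0 + t * ((w0^T *m S *m w1) 0 0 + (w1^T *m S *m w0) 0 0)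
     + t ^+ 2 * (w1^T *m S *m w1) 0 0.
    move=> S; have trD : (w0 + t *: w1)^T = w0^T + t *: w1^T by rewrite linearD linearZ.
    rewrite trD !mulmxDl !mulmxDr.
    rewrite -!scalemxAl -!scalemxAr !scalerA !eD !eZ; ring.
  exact: gen.
have hC : q = (e^T *m Sigma_LgB k xs us sn x *m e) 0 0.
  rewrite /q /w1 tr_col_mx trmx0 -[Sg]submxK mul_row_block mul_row_col.
  by rewrite !mul0mx !add0r mulmx0 add0r.
have hD : forall t : R, muB k xs us z sn x (t *: e)
    = (mb^T *m w0) 0 0 + t * (((dsubmx mb)^T) *m e) 0 0.
  move=> t; rewrite /muB hA mulmxDr -scalemxAr eD eZ; congr (_ + _ * _).
  by rewrite /w1 -/mb -{1}[mb]vsubmxK tr_col_mx mul_row_col mulmx0 add0r.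
have hE : forall t : R, (LgtB *m (t *: e)) 0 0 + t * (((dsubmx mb)^T) *m e) 0 0
    = t * (L *m e) 0 0.
  by move=> t; rewrite /L /LgB_hat mulmxDl -scalemxAr eZ eD; ring.
set p0 := (L *m e) 0 0.
have hF : (e^T *m F *m e) 0 0 = beta ^+ 2 * q - p0 ^+ 2.
  rewrite /F /Ftrade mulmxBr mulmxBl -scalemxAr -scalemxAl eN eZ hC -/L.
  suff -> : (e^T *m (L^T *m L) *m e) 0 0 = p0 ^+ 2 by [].
  rewrite !mulmxA -mulmxA -trmx_mul [X in X = _]mxE big_ord1.
  by rewrite [(_^T) 0 0]mxE /p0 expr2.
have hee : (e^T *m e) 0 0 = 1.
  rewrite mxE -He.2; apply: eq_bigr => i _; rewrite mxE expr2 //.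
have hF2 : (e^T *m F *m e) 0 0 = lam.
  by rewrite -mulmxA He.1 -scalemxAr eZ hee mulr1.
have hq : 0 < q.
  apply: HSigma; rewrite /w1 col_mx_eq0 eqxx /=.
  apply/eqP => e0; move: He.2; rewrite e0 big1 => [|i _]; last by rewrite mxE expr2 mulr0.
  by move/eqP; rewrite eq_sym oner_eq0.
have hp0 : p0 ^+ 2 = beta ^+ 2 * q - lam by rewrite -hF2 hF; ring.
have p0nz : p0 != 0.
  apply/eqP => p00; move: hp0; rewrite p00 expr0n /=.
  have : 0 < beta ^+ 2 * q by apply: mulr_gt0 => //; apply: exprn_gt0.
  lra.
have pp : 0 < `|p0| by rewrite normr_gt0.
have [amin [amin0 Ham]] := scal (LieF B ft x + (mb^T *m w0) 0 0 + gam (B x)) c bb q (-lam) pp Hbeta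
   ltac:(lra) ltac:(by rewrite -normrX ger0_norm ?sqr_ge0 // hp0; ring).
have main : forall alpha, amin < alpha -> socp_constraint k xs us z sn beta gam (LieF B ft x) LgtB (B x) x
        ((alpha * Num.sg p0) *: e).
  move=> alpha Ha; rewrite /socp_constraint /sigmaB hB hD.
  have := hE (alpha * Num.sg p0); rewrite -/p0 => hE'.
  have -> : LieF B ft x + (LgtB *m ((alpha * Num.sg p0) *: e)) 0 0 +
      ((mb^T *m w0) 0 0 + alpha * Num.sg p0 * (((dsubmx mb)^T) *m e) 0 0) -
      beta * Num.sqrt (c + alpha * Num.sg p0 * bb + (alpha * Num.sg p0) ^+ 2 * q) + gam (B x)
    = LieF B ft x + (mb^T *m w0) 0 0 + gam (B x) + alpha * `|p0| -
      beta * Num.sqrt (c + alpha * Num.sg p0 * bb + alpha ^+ 2 * q).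
    rewrite exprMn sqr_sg p0nz mulr1 normrEsg.
    have : (LgtB *m ((alpha * Num.sg p0) *: e)) 0 0 = alpha * Num.sg p0 * p0
       - alpha * Num.sg p0 * (((dsubmx mb)^T) *m e) 0 0 by rewrite -hE'; ring.
    move=> ->; ring.
  apply: Ham => //.
  rewrite !normrM normr_sg p0nz mulr1 ger0_norm //; apply: ltW; exact: lt_trans Ha.
split.
  by exists ((amin + 1) * Num.sg p0 *: e); apply: main; lra.
by exists amin; split.
Qed.
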